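(* Under the setting below, let $(x^*,z^*,s^* )$ with multiplier $\lambda^*$ for (C) (and nonnegative multipliers for the other constraints) be a KKT point of (P). Then for every $t$ with $(\beta_t,\theta_t)\in\Omega^{I}_t(\lambda^* )$ we have $(x_t^*,z_t^* )=(1,0)$, where $\Omega^{I}_t(\lambda)=\Big\{(\beta,\theta):\beta>0,\ \theta>\frac{\beta c_t e_t'(c_t)+d_t\lambda}{u_t'(1)},\ \beta<\frac{p_tc_t+r_t\lambda}{c_te_t'(c_t)}\Big\}$.
   Context: Fix an integer $T\ge 1$, a data cap $Q>0$ and an overage fee $\pi>0$. For each $t\in\{1,\dots,T\}$ fix reals $d_t\ge 0$, $r_t\ge 0$, $c_t>0$, $p_t>0$, $\theta_t>0$, $\beta_t>0$ and functions $u_t,e_t:[0,\infty)\to\mathbb{R}$ such that: $u_t$ is continuous, increasing and strictly concave, differentiable on $(0,\infty)$, and $u_t':(0,\infty)\to(0,\infty)$ is a strictly decreasing bijection with inverse $u_t'^{-1}$; $e_t$ is increasing, strictly convex and continuously differentiable, and $e_t':[0,\infty)\to[0,\infty)$ is a strictly increasing bijection with inverse $e_t'^{-1}$. For $0\le z\le x\le 1$ let $\tilde f_t(x,z)=\theta_t u_t(x)-\beta_t e_t((x-z)c_t)-p_t c_t z$ and $\tilde h_t(x,z)=d_t x+r_t z$. Problem (P): maximize $\sum_{t=1}^T \tilde f_t(x_t,z_t)-\pi s$ over $x,z\in\mathbb{R}^T$, $s\in\mathbb{R}$, subject to $0\le z_t\le x_t\le 1$ for all $t$, $s\ge 0$,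 and (C): $s\ge \sum_{t=1}^T\tilde h_t(x_t,z_t)-Q$. A KKT point of (P) consists of a feasible $(x^*,z^*,s^* )$ and nonnegative Lagrange multipliers for all constraints satisfying stationarity of the Lagrangian and complementary slackness; $\lambda^*$ denotes the multiplier of (C) (the shadow price of wireless data). *)

(* Defs.v *)
(* concrete reals R. Periods are indexed t = 0 .. T-1. *)
From Stdlib Require Import Reals.
Open Scope R_scope.

Fixpoint sumT (f : nat -> R) (n : nat) : R :=
  match n with O => 0 | S k => sumT f k + f k end.

Definition has_deriv_nonneg (f : R -> R) (x l : R) : Prop :=
  forall eps, 0 < eps -> exists delta, 0 < delta /\
    forall y, 0 <= y -> y <> x -> Rabs (y - x) < delta ->
      Rabs ((f y - f x) / (y - x) - l) < eps.

Definition cont_nonneg (f : R -> R) (x : R) : Prop :=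
  forall eps, 0 < eps -> exists delta, 0 < delta /\
    forall y, 0 <= y -> Rabs (y - x) < delta -> Rabs (f y - f x) < eps.

Definition utility_hyp (u up : R -> R) : Prop :=
  (forall x, 0 <= x -> cont_nonneg u x) /\
  (forall x y, 0 <= x -> x < y -> u x < u y) /\
  (forall x y l, 0 <= x -> 0 <= y -> x <> y -> 0 < l < 1 ->
      u (l * x + (1 - l) * y) > l * u x + (1 - l) * u y) /\
  (forall x, 0 < x -> derivable_pt_lim u x (up x)) /\
  (forall x, 0 < x -> 0 < up x) /\
  (forall x y, 0 < x -> x < y -> up y < up x) /\
  (forall w, 0 < w -> exists x, 0 < x /\ up x = w).

Definition cost_hyp (e ep : R -> R) : Prop :=
  (forall x y, 0 <= x -> x < y -> e x < e y) /\
  (forall x y l, 0 <= x -> 0 <= y -> x <> y -> 0 < l < 1 ->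
      e (l * x + (1 - l) * y) < l * e x + (1 - l) * e y) /\
  (forall x, 0 <= x -> has_deriv_nonneg e x (ep x)) /\
  (forall x, 0 <= x -> cont_nonneg ep x) /\
  (forall x, 0 <= x -> 0 <= ep x) /\
  (forall x y, 0 <= x -> x < y -> ep x < ep y) /\
  (forall w, 0 <= w -> exists x, 0 <= x /\ ep x = w).

Definition ftil (u e : R -> R) (theta beta c p x z : R) : R :=
  theta * u x - beta * e ((x - z) * c) - p * c * z.
Definition htil (d r x z : R) : R := d * x + r * z.

(* Multipliers: a t for z_t >= 0, b t for z_t <= x_t,
   g t for x_t <= 1, mu for s >= 0, lam for (C).  Stationarity of the
   Lagrangian  sum f~ - pi s + sum a z + sum b (x - z) + sum g (1 - x)
   + mu s + lam (s - sum h~ + Q)  w.r.t. x_t, z_t, s.  The partial derivative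
   of f~_t in x_t requires the derivative of u_t at x_t (within [0,oo)). *)
Definition KKT (T : nat) (Q pi : R) (d r c p theta beta : nat -> R)
  (u e ep : nat -> R -> R)
  (x z : nat -> R) (s : R) (a b g : nat -> R) (mu lam : R) : Prop :=
  (forall t, (t < T)%nat -> 0 <= z t /\ z t <= x t /\ x t <= 1) /\
  0 <= s /\
  s >= sumT (fun t => htil (d t) (r t) (x t) (z t)) T - Q /\
  (forall t, (t < T)%nat -> 0 <= a t /\ 0 <= b t /\ 0 <= g t) /\
  0 <= mu /\ 0 <= lam /\
  (forall t, (t < T)%nat -> exists du, has_deriv_nonneg (u t) (x t) du /\
      theta t * du - beta t * c t * ep t ((x t - z t) * c t)
        + b t - g t - lam * d t = 0) /\
  (forall t, (t < T)%nat ->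
      beta t * c t * ep t ((x t - z t) * c t) - p t * c t
        + a t - b t - lam * r t = 0) /\
  - pi + mu + lam = 0 /\
  (forall t, (t < T)%nat ->
      a t * z t = 0 /\ b t * (x t - z t) = 0 /\ g t * (1 - x t) = 0) /\
  mu * s = 0 /\
  lam * (s - sumT (fun t => htil (d t) (r t) (x t) (z t)) T + Q) = 0.

Definition OmegaI (c d p r : R) (e'c u'1 : R) (lam : R) (be th : R) : Prop :=
  0 < be /\ th > (be * c * e'c + d * lam) / u'1 /\
  be < (p * c + r * lam) / (c * e'c).

(* Main.v *)
Require Import Defs.
From Stdlib Require Import Reals Lra Psatz.
Open Scope R_scope.

Lemma dpl_to_nonneg (u : R -> R) (q D : R) :
  derivable_pt_lim u q D -> has_deriv_nonneg u q D.
Proof.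
  intros H eps Heps. destruct (H eps Heps) as [del Hd].
  exists del. split; [apply cond_pos|]. intros y _ Hy Hyd.
  specialize (Hd (y - q)). replace (q + (y - q)) with y in Hd by ring.
  apply Hd; [lra|exact Hyd].
Qed.

Lemma tangent (u : R -> R) (q h D : R) :
  (forall x y l, 0 <= x -> 0 <= y -> x <> y -> 0 < l < 1 ->
      u (l * x + (1 - l) * y) > l * u x + (1 - l) * u y) ->
  0 <= q -> 0 <= q + h -> h <> 0 -> has_deriv_nonneg u q D ->
  u (q + h) <= u q + D * h.
Proof.
  intros Hc Hq Hqh Hh Hd.
  destruct (Rle_or_lt (u (q + h)) (u q + D * h)) as [?|Hk]; [assumption|exfalso].
  set (k := u (q + h) - u q - D * h).
  assert (Hk0 : 0 < k) by (unfold k; lra).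
  assert (Hah : 0 < Rabs h) by (apply Rabs_pos_lt; exact Hh).
  destruct (Hd (k / Rabs h)) as [del [Hdel Hdd]].
  { apply Rdiv_lt_0_compat; lra. }
  set (l := Rmin (1/2) (del / (2 * Rabs h))).
  assert (Hl0 : 0 < l).
  { unfold l. apply Rmin_glb_lt; [lra|]. apply Rdiv_lt_0_compat; lra. }
  assert (Hl1 : l <= 1/2) by (unfold l; apply Rmin_l).
  assert (Hl2 : l <= del / (2 * Rabs h)) by (unfold l; apply Rmin_r).
  assert (Hl2' : l * Rabs h <= del / 2).
  { apply Rmult_le_compat_r with (r := Rabs h) in Hl2; [|lra].
    replace (del / (2 * Rabs h) * Rabs h) with (del/2) in Hl2 by (field; lra). lra. }
  set (y := q + l * h).
  assert (Hy0 : 0 <= y).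
  { unfold y. replace (q + l * h) with (l * (q + h) + (1 - l) * q) by ring. nra. }
  assert (Hlh : l * h <> 0) by (apply Rmult_integral_contrapositive; split; lra).
  assert (Hyq : y <> q) by (unfold y; lra).
  assert (Hyd : Rabs (y - q) < del).
  { unfold y. replace (q + l * h - q) with (l * h) by ring.
    rewrite Rabs_mult, (Rabs_right l) by lra. lra. }
  specialize (Hdd y Hy0 Hyq Hyd).
  assert (Hconc := Hc (q + h) q l ltac:(lra) Hq ltac:(lra) ltac:(lra)).
  replace (l * (q + h) + (1 - l) * q) with y in Hconc by (unfold y; ring).
  apply Rabs_def2 in Hdd. destruct Hdd as [Hup Hlo].
  replace (y - q) with (l * h) in Hup, Hlo by (unfold y; ring).
  set (Qt := (u y - u q) / (l * h)) in *.
  assert (HA : u y - u q = Qt * (l * h)) by (unfold Qt; field; split; lra).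
  destruct (Rle_or_lt 0 h) as [Hh0|Hh0].
  - assert (Hhp : 0 < h) by lra. rewrite (Rabs_right h) in Hup by lra.
    assert (Qt < D + k / h) by lra.
    assert (Qt * (l * h) < (D + k / h) * (l * h)) by (apply Rmult_lt_compat_r; nra).
    replace ((D + k / h) * (l * h)) with (D * l * h + k * l) in H0 by (field; lra).
    unfold k in *. nra.
  - rewrite (Rabs_left h) in Hlo by lra.
    assert (D + k / h < Qt) by (replace (k / - h) with (- (k / h)) in Hlo by (field; lra); lra).
    assert (Qt * (l * h) < (D + k / h) * (l * h)).
    { apply Rmult_lt_gt_compat_neg_l with (r := l * h) in H; [|nra]. lra. }
    replace ((D + k / h) * (l * h)) with (D * l * h + k * l) in H0 by (field; lra).
    unfold k in *. nra.
Qed.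

Theorem lemma1 (T : nat) (Q pi : R) (d r c p theta beta : nat -> R)
  (u up e ep : nat -> R -> R) :
  (1 <= T)%nat -> 0 < Q -> 0 < pi ->
  (forall t, (t < T)%nat ->
     0 <= d t /\ 0 <= r t /\ 0 < c t /\ 0 < p t /\ 0 < theta t /\ 0 < beta t) ->
  (forall t, (t < T)%nat -> utility_hyp (u t) (up t)) ->
  (forall t, (t < T)%nat -> cost_hyp (e t) (ep t)) ->
  forall (x z : nat -> R) (s : R) (a b g : nat -> R) (mu lam : R),
  KKT T Q pi d r c p theta beta u e ep x z s a b g mu lam ->
  forall t, (t < T)%nat ->
  OmegaI (c t) (d t) (p t) (r t) (ep t (c t)) (up t 1) lam (beta t) (theta t) ->
  x t = 1 /\ z t = 0.
Proof.
  intros _ _ _ Hpar Hu He x z s a b g mu lam HK t Ht Hom.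
  destruct (Hpar t Ht) as (Hd & Hr & Hcp & Hp & Hth & Hbe).
  destruct (Hu t Ht) as (_ & _ & Uconc & Uder & Upos & _ & _).
  destruct (He t Ht) as (_ & _ & _ & _ & Epos & Emon & _).
  destruct HK as (Hfeas & _ & _ & Hmul & _ & Hlam & Hstx & Hstz & _ & Hcs & _ & _).
  destruct (Hfeas t Ht) as (Hz0 & Hzx & Hx1).
  destruct (Hmul t Ht) as (Ha & Hb & Hg).
  destruct (Hcs t Ht) as (Haz & Hbxz & Hgx).
  specialize (Hstz t Ht). destruct (Hstx t Ht) as [du [Hdu Hsx]].
  destruct Hom as (_ & Hom1 & Hom2).
  assert (Hep0 : 0 < ep t (c t)).
  { assert (H1 := Emon 0 (c t) ltac:(lra) Hcp). assert (H2 := Epos 0 ltac:(lra)). lra. }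
  assert (HE : ep t ((x t - z t) * c t) <= ep t (c t)).
  { destruct (Rle_or_lt (c t) ((x t - z t) * c t)) as [H|H].
    - replace ((x t - z t) * c t) with (c t) by nra. lra.
    - left. apply Emon; [nra|exact H]. }
  assert (Hup1 : 0 < up t 1) by (apply Upos; lra).
  assert (HO1 : theta t * up t 1 > beta t * c t * ep t (c t) + d t * lam).
  { apply Rmult_gt_compat_r with (r := up t 1) in Hom1; [|lra].
    unfold Rdiv in Hom1. rewrite Rmult_assoc, Rinv_l, Rmult_1_r in Hom1 by lra. lra. }
  assert (HO2 : beta t * (c t * ep t (c t)) < p t * c t + r t * lam).
  { apply Rmult_lt_compat_r with (r := c t * ep t (c t)) in Hom2; [|nra].
    unfold Rdiv in Hom2. rewrite Rmult_assoc, Rinv_l, Rmult_1_r in Hom2 by nra. lra. }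
  assert (HbE : beta t * c t * ep t ((x t - z t) * c t) <= beta t * c t * ep t (c t)).
  { apply Rmult_le_compat_l; [nra|exact HE]. }
  assert (Hz : z t = 0).
  { destruct (Req_dec (z t) 0) as [?|Hnz]; [assumption|exfalso].
    assert (a t = 0).
    { destruct (Rmult_integral _ _ Haz); [assumption|contradiction]. }
    nra. }
  split; [|exact Hz].
  destruct (Req_dec (x t) 1) as [?|Hnx]; [assumption|exfalso].
  assert (Hg0 : g t = 0).
  { destruct (Rmult_integral _ _ Hgx); [assumption|lra]. }
  assert (Hdu1 : theta t * du < theta t * up t 1) by nra.
  assert (Hlt : du < up t 1) by nra.
  assert (T1 := tangent (u t) (x t) (1 - x t) du Uconc ltac:(lra) ltac:(lra) ltac:(lra) Hdu).
  assert (T2 := tangent (u t) 1 (x t - 1) (up t 1) Uconc ltac:(lra) ltac:(lra) ltac:(lra)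
                 (dpl_to_nonneg _ _ _ (Uder 1 ltac:(lra)))).
  replace (x t + (1 - x t)) with 1 in T1 by ring.
  replace (1 + (x t - 1)) with (x t) in T2 by ring.
  nra.
Qed.
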